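(* Let $\sigma:\mathbb R\to\mathbb R$ be a real-analytic function such that $\sigma^{(n_j)}(0)\neq0$ for an infinite sequence of distinct indices $\{n_j\}_{j=1}^\infty$. Let $d\in\mathbb N$ and let $w_1,\dots,w_m\in\mathbb R^d\setminus\{0\}$ satisfy $w_k\neq\pm w_j$ for all $1\leq k<j\leq m$. Then the set of functions on $\mathbb R^d$ $$\{\sigma(w_i^\top x),\ \sigma'(w_i^\top x)x_1,\ \dots,\ \sigma'(w_i^\top x)x_d\}_{i=1}^m$$ (where $x_t$ denotes the $t$-th coordinate of $x$) consists of $m(d+1)$ linearly independent functions. *)

(* Defs.v *)
From Stdlib Require Import Reals.
From Coquelicot Require Export Coquelicot.
Open Scope R_scope.

Fixpoint sumR (n : nat) (f : nat -> R) : R :=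
  match n with
  | O => 0
  | S k => sumR k f + f k
  end.

(* Vectors of R^d are represented as functions nat -> R, only the
   coordinates t < d being relevant. *)
Definition dotR (d : nat) (w x : nat -> R) : R := sumR d (fun t => w t * x t).

Definition real_analytic (f : R -> R) : Prop :=
  forall x0 : R, exists r : R, 0 < r /\ exists a : nat -> R,
    forall x : R, Rabs (x - x0) < r -> is_pseries a (x - x0) (f x).

(* Main.v *)
Require Import Defs.
From Stdlib Require Import Reals Lra Lia List Classical FinFun.
From Coquelicot Require Import Coquelicot.
Open Scope R_scope.

Lemma sumR_ext n f g : (forall i, (i < n)%nat -> f i = g i) -> sumR n f = sumR n g.
Proof. induction n; simpl; intros H; auto. rewrite IHn; [rewrite H|]; auto; intros; apply H; lia. Qed.

Lemma sumR_plus n f g : sumR n (fun i => f i + g i) = sumR n f + sumR n g.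
Proof. induction n; simpl; [lra|]. rewrite IHn; lra. Qed.

Lemma sumR_scal n c f : sumR n (fun i => c * f i) = c * sumR n f.
Proof. induction n; simpl; [lra|]. rewrite IHn; lra. Qed.

Lemma sumR_minus n f g : sumR n (fun i => f i - g i) = sumR n f - sumR n g.
Proof. induction n; simpl; [lra|]. rewrite IHn; lra. Qed.

Lemma sumR_zero n f : (forall i, (i < n)%nat -> f i = 0) -> sumR n f = 0.
Proof. induction n; simpl; intros H; [lra|]. rewrite IHn, H; [lra|lia|intros; apply H; lia]. Qed.

Lemma sumR_abs n f : Rabs (sumR n f) <= sumR n (fun i => Rabs (f i)).
Proof. induction n; simpl. rewrite Rabs_R0; lra.
  eapply Rle_trans; [apply Rabs_triang|lra]. Qed.

Lemma sumR_le n f g : (forall i, (i < n)%nat -> f i <= g i) -> sumR n f <= sumR n g.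
Proof. induction n; simpl; intros H; [lra|]. assert (f n <= g n) by (apply H; lia).
  assert (sumR n f <= sumR n g) by (apply IHn; intros; apply H; lia). lra. Qed.

Lemma sumR_split n f i : (i < n)%nat ->
  sumR n f = f i + sumR n (fun j => if Nat.eq_dec j i then 0 else f j).
Proof. induction n; simpl; intros H; [lia|].
  destruct (Nat.eq_dec n i).
  - subst i. rewrite (sumR_ext n (fun j => if Nat.eq_dec j n then 0 else f j) f); [lra|]. intros j Hj. destruct (Nat.eq_dec j n); [lia|auto].
  - rewrite (IHn ltac:(lia)); lra. Qed.

Lemma poly_ev d (c : nat -> R) : (exists t, (t < d)%nat /\ c t <> 0) ->
  exists R0, forall l, R0 < l -> sumR d (fun t => c t * l ^ t) <> 0.
Proof.
  induction d as [|d IH]; intros [t [Ht Hc]]; [lia|].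
  destruct (Req_dec (c d) 0) as [Hd|Hd].
  - destruct IH as [R0 HR]. { exists t; split; auto. assert (t <> d) by (intro; subst; auto). lia. }
    exists R0; intros l Hl; simpl; rewrite Hd; specialize (HR l Hl); lra.
  - set (C := sumR d (fun t => Rabs (c t))).
    assert (HC : 0 <= C). { unfold C; clear; induction d; simpl; [lra|]. pose proof (Rabs_pos (c d)); lra. }
    exists (Rmax 1 (C / Rabs (c d))). intros l Hl.
    assert (Hl1 : 1 < l) by (eapply Rle_lt_trans; [apply Rmax_l|exact Hl]).
    assert (Hl2 : C / Rabs (c d) < l) by (eapply Rle_lt_trans; [apply Rmax_r|exact Hl]).
    assert (Hcd : 0 < Rabs (c d)) by (apply Rabs_pos_lt; auto).
    assert (HlC : C < l * Rabs (c d)).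
    { apply (Rmult_lt_compat_r (Rabs (c d))) in Hl2; auto. unfold Rdiv in Hl2.
      rewrite Rmult_assoc, Rinv_l in Hl2; lra. }
    assert (Hb : Rabs (sumR d (fun t => c t * l ^ t)) * l <= C * l ^ d).
    { eapply Rle_trans. apply Rmult_le_compat_r. lra. apply sumR_abs.
      unfold C. rewrite Rmult_comm, <- sumR_scal, Rmult_comm, <- sumR_scal.
      apply sumR_le. intros i Hi. rewrite Rabs_mult, (Rabs_right (l ^ i)).
      2: { apply Rle_ge, pow_le; lra. }
      rewrite <- Rmult_assoc, (Rmult_comm l), Rmult_assoc. rewrite (Rmult_comm (l^d)).
      apply Rmult_le_compat_l. apply Rabs_pos.
      replace (l * l ^ i) with (l ^ (S i)) by reflexivity. apply Rle_pow; [lra|lia]. }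
    assert (Hpd : 0 < l ^ d) by (apply pow_lt; lra).
    simpl. intro H0.
    assert (Heq : sumR d (fun t => c t * l ^ t) = - (c d * l ^ d)) by lra.
    rewrite Heq, Rabs_Ropp, Rabs_mult, (Rabs_right (l^d)) in Hb by lra.
    assert (C * l ^ d < Rabs (c d) * l ^ d * l). { rewrite Rmult_assoc, (Rmult_comm (l^d)), <- Rmult_assoc.
      apply Rmult_lt_compat_r; auto. lra. }
    lra.
Qed.

Lemma ev_fin m (Q : nat -> R -> Prop) :
  (forall i, (i < m)%nat -> exists R0, forall l, R0 < l -> Q i l) ->
  exists R0, forall l, R0 < l -> forall i, (i < m)%nat -> Q i l.
Proof.
  induction m; intros H. exists 0; intros; lia.
  destruct IHm as [R1 H1]. intros; apply H; lia.
  destruct (H m ltac:(lia)) as [R2 H2].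
  exists (Rmax R1 R2). intros l Hl i Hi.
  assert (R1 < l) by (eapply Rle_lt_trans; [apply Rmax_l|eauto]).
  assert (R2 < l) by (eapply Rle_lt_trans; [apply Rmax_r|eauto]).
  destruct (Nat.eq_dec i m). subst; auto. apply H1; auto; lia.
Qed.

Lemma cv1 : CV_radius (fun _ : nat => 1) = 1.
Proof.
  rewrite (CV_radius_finite_DAlembert _ 1). f_equal; apply Rinv_1.
  intros; lra. lra.
  eapply is_lim_seq_ext; [|apply is_lim_seq_const]. intros n; simpl.
  rewrite Rdiv_1_r, Rabs_R1; auto.
Qed.

Lemma npow_lim r : 0 <= r < 1 -> is_lim_seq (fun n => INR n * r ^ n) 0.
Proof.
  intros Hr.
  assert (H : ex_pseries (PS_derive (fun _ : nat => 1)) r).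
  { apply ex_pseries_derive. rewrite cv1. simpl. rewrite Rabs_right; lra. }
  apply ex_series_lim_0 in H.
  apply (is_lim_seq_le_le (fun _ => 0) _ (fun n => INR (S n) * r ^ n)).
  - intros n; split. apply Rmult_le_pos. apply pos_INR. apply pow_le; lra.
    apply Rmult_le_compat_r. apply pow_le; lra. apply le_INR; lia.
  - apply is_lim_seq_const.
  - eapply is_lim_seq_ext; [|exact H]. intros n; simpl.
    rewrite pow_n_pow. unfold PS_derive, scal; simpl; unfold mult; simpl. ring.
Qed.

Lemma bound_lim A B r : 0 <= r < 1 -> is_lim_seq (fun n => (A + INR n * B) * r ^ n) 0.
Proof.
  intros Hr.
  apply is_lim_seq_ext with (fun n => A * r ^ n + B * (INR n * r ^ n)).
  intros; ring.
  replace 0 with (A * 0 + B * 0) by ring.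
  apply is_lim_seq_plus'; apply is_lim_seq_mult'; try apply is_lim_seq_const.
  apply is_lim_seq_geom; rewrite Rabs_right; lra.
  apply npow_lim; auto.
Qed.

Lemma sumR_lim m (g : nat -> nat -> R) :
  (forall j, (j < m)%nat -> is_lim_seq (g j) 0) ->
  is_lim_seq (fun n => sumR m (fun j => g j n)) 0.
Proof.
  induction m; intros H; simpl. apply is_lim_seq_const.
  replace (Finite 0) with (Finite (0 + 0)) by (f_equal; ring).
  apply is_lim_seq_plus'. apply IHm; intros; apply H; lia. apply H; lia.
Qed.

Lemma absT a z M n : 0 < M -> Rabs (a * z ^ n * / M ^ n) = Rabs a * (Rabs z / M) ^ n.
Proof.
  intros HM. unfold Rdiv. rewrite Rpow_mult_distr, pow_inv, !Rabs_mult, Rabs_inv, <- !RPow_abs.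
  rewrite (Rabs_right M) by lra. ring.
Qed.

Lemma key m p q z (S : nat -> Prop) i :
  (forall N, exists n, (N <= n)%nat /\ S n) ->
  (forall n, S n -> sumR m (fun j => (p j + INR n * q j) * z j ^ n) = 0) ->
  (i < m)%nat -> z i <> 0 ->
  (forall j, (j < m)%nat -> j <> i -> Rabs (z j) <> Rabs (z i)) ->
  (forall j, (j < m)%nat -> Rabs (z i) < Rabs (z j) -> p j = 0 /\ q j = 0) ->
  p i = 0 /\ q i = 0.
Proof.
  intros HS Hsum Hi Hz Hne Hbig.
  set (M := Rabs (z i)). assert (HM : 0 < M) by (apply Rabs_pos_lt; auto).
  set (rho := fun j => if Rlt_dec (Rabs (z j)) M then Rabs (z j) / M else 0).
  assert (Hrho : forall j, 0 <= rho j < 1).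
  { intros j; unfold rho; destruct (Rlt_dec (Rabs (z j)) M); [|lra].
    split. apply Rmult_le_pos; [apply Rabs_pos|left; apply Rinv_0_lt_compat; lra].
    apply (Rmult_lt_reg_r M); auto. unfold Rdiv; rewrite Rmult_assoc, Rinv_l; lra. }
  set (E := fun n => sumR m (fun j => if Nat.eq_dec j i then 0 else
                 (Rabs (p j) + INR n * Rabs (q j)) * rho j ^ n)).
  assert (HE : is_lim_seq E 0).
  { unfold E. apply sumR_lim. intros j Hj. destruct (Nat.eq_dec j i).
    apply is_lim_seq_const. apply bound_lim; auto. }
  assert (Hb : forall n, S n -> Rabs (p i + INR n * q i) <= E n).
  { intros n Sn. specialize (Hsum n Sn).
    set (T := fun j => (p j + INR n * q j) * z j ^ n * / M ^ n).
    assert (H0 : sumR m T = 0).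
    { unfold T. rewrite (sumR_ext _ _ (fun j => / M ^ n * ((p j + INR n * q j) * z j ^ n))).
      rewrite sumR_scal, Hsum; ring. intros; ring. }
    rewrite (sumR_split _ _ i Hi) in H0.
    assert (HTi : Rabs (T i) = Rabs (p i + INR n * q i)).
    { unfold T. rewrite absT by auto. fold M. unfold Rdiv. rewrite Rinv_r, pow1 by lra. ring. }
    rewrite <- HTi. replace (T i) with (- sumR m (fun j => if Nat.eq_dec j i then 0 else T j)) by lra.
    rewrite Rabs_Ropp. eapply Rle_trans. apply sumR_abs. unfold E. apply sumR_le.
    intros j Hj. destruct (Nat.eq_dec j i). rewrite Rabs_R0; lra.
    unfold T. rewrite absT by auto. unfold rho.
    destruct (Rlt_dec (Rabs (z j)) M).
    - apply Rmult_le_compat_r. apply pow_le. apply Rmult_le_pos; [apply Rabs_pos|left; apply Rinv_0_lt_compat; lra].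
      eapply Rle_trans. apply Rabs_triang. rewrite Rabs_mult, (Rabs_right (INR n)). lra. apply Rle_ge, pos_INR.
    - assert (Rabs (z i) < Rabs (z j)). { specialize (Hne j Hj n0). fold M in Hne |- *. lra. }
      destruct (Hbig j Hj H) as [-> ->]. rewrite Rmult_0_r, Rplus_0_r, Rabs_R0, Rmult_0_l.
      apply Rmult_le_pos. pose proof (pos_INR n). pose proof (Rabs_pos (p j)). pose proof (Rabs_pos (q j)). nra.
      apply pow_le; lra. }
  apply is_lim_seq_Reals in HE.
  assert (Hq : q i = 0).
  { apply NNPP; intro Hq. assert (Hqa : 0 < Rabs (q i)) by (apply Rabs_pos_lt; auto).
    destruct (HE 1 ltac:(lra)) as [N HN].
    destruct (INR_unbounded ((Rabs (p i) + 1) / Rabs (q i))) as [K HK].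
    destruct (HS (max N K)) as [n [Hn Sn]].
    specialize (HN n ltac:(lia)). specialize (Hb n Sn). unfold R_dist in HN. rewrite Rminus_0_r in HN.
    pose proof (Rle_abs (E n)).
    assert (INR K <= INR n) by (apply le_INR; lia).
    assert (Rabs (p i) + 1 < INR n * Rabs (q i)).
    { apply (Rmult_lt_compat_r (Rabs (q i))) in HK; auto. unfold Rdiv in HK.
      rewrite Rmult_assoc, Rinv_l in HK by lra. nra. }
    assert (Rabs (INR n * q i) <= Rabs (p i + INR n * q i) + Rabs (p i)).
    { replace (INR n * q i) with ((p i + INR n * q i) + - p i) at 1 by ring.
      eapply Rle_trans. apply Rabs_triang. rewrite Rabs_Ropp; lra. }
    rewrite Rabs_mult, (Rabs_right (INR n)) in H2 by (apply Rle_ge, pos_INR). lra. }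
  split; auto. rewrite Hq in Hb.
  apply NNPP; intro Hp. assert (Hpa : 0 < Rabs (p i)) by (apply Rabs_pos_lt; auto).
  destruct (HE (Rabs (p i)) Hpa) as [N HN].
  destruct (HS N) as [n [Hn Sn]]. specialize (HN n Hn). specialize (Hb n Sn).
  unfold R_dist in HN. rewrite Rminus_0_r in HN. pose proof (Rle_abs (E n)).
  rewrite Rmult_0_r, Rplus_0_r in Hb. lra.
Qed.

Lemma max_ex m (P : nat -> Prop) (f : nat -> R) :
  (exists i, (i < m)%nat /\ P i) ->
  exists i, (i < m)%nat /\ P i /\ forall j, (j < m)%nat -> P j -> f j <= f i.
Proof.
  induction m; intros [i [Hi Pi]]; [lia|].
  destruct (classic (exists i, (i < m)%nat /\ P i)) as [Hex|Hnex].
  - destruct (IHm Hex) as [k [Hk [Pk Hmax]]].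
    destruct (classic (P m)) as [Pm|nPm].
    + destruct (Rle_dec (f m) (f k)).
      * exists k; repeat split; auto. intros j Hj Pj. destruct (Nat.eq_dec j m). subst; auto. apply Hmax; auto; lia.
      * exists m; repeat split; auto. intros j Hj Pj. destruct (Nat.eq_dec j m). subst; lra.
        assert (f j <= f k) by (apply Hmax; auto; lia). lra.
    + exists k; repeat split; auto. intros j Hj Pj. destruct (Nat.eq_dec j m). subst; tauto. apply Hmax; auto; lia.
  - assert (i = m). { destruct (Nat.eq_dec i m); auto. exfalso; apply Hnex; exists i; split; auto; lia. }
    subst. exists m; repeat split; auto. intros j Hj Pj. destruct (Nat.eq_dec j m). subst; lra.
    exfalso; apply Hnex; exists j; split; auto; lia.
Qed.

Lemma exp_lemma m p q z (S : nat -> Prop) :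
  (forall N, exists n, (N <= n)%nat /\ S n) ->
  (forall n, S n -> sumR m (fun j => (p j + INR n * q j) * z j ^ n) = 0) ->
  (forall i, (i < m)%nat -> z i <> 0) ->
  (forall i j, (i < m)%nat -> (j < m)%nat -> i <> j -> Rabs (z i) <> Rabs (z j)) ->
  forall i, (i < m)%nat -> p i = 0 /\ q i = 0.
Proof.
  intros HS Hsum Hz Hne.
  apply NNPP; intro H. apply not_all_ex_not in H. destruct H as [i0 H].
  destruct (max_ex m (fun i => ~ (p i = 0 /\ q i = 0)) (fun i => Rabs (z i))) as [i [Hi [Pi Hmax]]].
  { exists i0. apply imply_to_and in H. auto. }
  apply Pi. apply (key m p q z S i); auto.
  - intros j Hj Hlt. apply NNPP; intro Pj. specialize (Hmax j Hj Pj). lra.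
Qed.

Lemma ps_iff (a : nat -> R) (x l : R) : is_pseries a x l <-> is_series (fun n => a n * x ^ n) l.
Proof.
  unfold is_pseries; split; apply is_series_ext; intros n;
  unfold scal; simpl; unfold mult; simpl;
  rewrite Rmult_comm; f_equal; try apply pow_n_pow; try (symmetry; apply pow_n_pow).
Qed.

Lemma is_series_zero : is_series (fun _ : nat => 0) 0.
Proof.
  assert (H := is_series_geom (1/2) ltac:(rewrite Rabs_right; lra)).
  apply (is_series_scal 0) in H.
  unfold scal in H; simpl in H; unfold mult in H; simpl in H.
  rewrite Rmult_0_l in H. eapply is_series_ext; [|exact H].
  intros; simpl; ring.
Qed.

Lemma is_series_sumR m (f : nat -> nat -> R) (l : nat -> R) :
  (forall i, (i < m)%nat -> is_series (f i) (l i)) ->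
  is_series (fun k => sumR m (fun i => f i k)) (sumR m l).
Proof.
  induction m; intros H; simpl. apply is_series_zero.
  apply (is_series_plus (fun k => sumR m (fun i => f i k)) (f m)).
  apply IHm; intros; apply H; lia. apply H; lia.
Qed.

Lemma radius_lb (a : nat -> R) (r : R) : (forall x, Rabs x < r -> ex_pseries a x) ->
  forall y, Rabs y < r -> Rbar_lt (Rabs y) (CV_radius a).
Proof.
  intros H y Hy. set (x := (Rabs y + r) / 2).
  assert (Hx : Rabs x = x) by (apply Rabs_right; pose proof (Rabs_pos y); unfold x; lra).
  destruct (H x ltac:(rewrite Hx; unfold x; lra)) as [l Hl].
  apply ps_iff in Hl. assert (Hl' : ex_series (fun n => a n * x ^ n)) by (exists l; auto).
  apply ex_series_lim_0 in Hl'.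
  assert (Rbar_le (Rabs x) (CV_radius a)).
  { apply Rbar_not_lt_le. intro Hc. apply (CV_disk_outside a x Hc). exact Hl'. }
  rewrite Hx in H0. eapply Rbar_lt_le_trans; [|exact H0]. simpl. unfold x; lra.
Qed.

Section Analytic.
Variable sig : R -> R.
Variable r : R.
Variable c : nat -> R.
Hypothesis Hr : 0 < r.
Hypothesis Hc : forall x, Rabs x < r -> is_pseries c x (sig x).

Lemma L1 y : Rabs y < r -> Rbar_lt (Rabs y) (CV_radius c).
Proof. apply radius_lb. intros x Hx; eexists; apply Hc; auto. Qed.

Lemma L2 y : Rabs y < r -> locally y (fun t => sig t = PSeries c t).
Proof.
  intros Hy. assert (He : 0 < r - Rabs y) by lra.
  exists (mkposreal _ He). intros t Ht. simpl in Ht.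
  unfold ball in Ht; simpl in Ht; unfold AbsRing_ball, abs, minus, plus, opp in Ht; simpl in Ht.
  symmetry; apply is_pseries_unique, Hc.
  replace t with ((t + - y) + y) by ring. eapply Rle_lt_trans. apply Rabs_triang. lra.
Qed.

Lemma L3 y : Rabs y < r -> is_pseries (PS_derive c) y (Derive sig y).
Proof.
  intros Hy. rewrite (Derive_ext_loc _ _ _ (L2 y Hy)).
  apply is_pseries_derive, L1; auto.
Qed.

Lemma L4 n : Derive_n sig n 0 = c n * INR (Factorial.fact n).
Proof.
  assert (H0 : Rabs 0 < r) by (rewrite Rabs_R0; auto).
  rewrite (Derive_n_ext_loc _ _ _ _ (L2 0 H0)).
  apply Derive_n_coef. pose proof (L1 0 H0). rewrite Rabs_R0 in H. exact H.
Qed.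

End Analytic.

Lemma is_series_scalR (f : nat -> R) (l k : R) : is_series f l -> is_series (fun n => k * f n) (k * l).
Proof. intros H. exact (is_series_scal k f l H). Qed.

Lemma is_series_plusR (f g : nat -> R) (l1 l2 : R) : is_series f l1 -> is_series g l2 ->
  is_series (fun n => f n + g n) (l1 + l2).
Proof. intros H1 H2. exact (is_series_plus f g l1 l2 H1 H2). Qed.

Lemma sumR_nonneg n f : (forall i, (i < n)%nat -> 0 <= f i) -> 0 <= sumR n f.
Proof. induction n; simpl; intros H; [lra|]. assert (0 <= f n) by (apply H; lia).
  assert (0 <= sumR n f) by (apply IHn; intros; apply H; lia). lra. Qed.

Lemma sumR_term n f i : (forall j, (j < n)%nat -> 0 <= f j) -> (i < n)%nat -> f i <= sumR n f.
Proof. intros H Hi. rewrite (sumR_split n f i Hi).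
  assert (0 <= sumR n (fun j => if Nat.eq_dec j i then 0 else f j)).
  { apply sumR_nonneg. intros j Hj. destruct (Nat.eq_dec j i); [lra|auto]. }
  lra. Qed.

Lemma coef_id (sig : R -> R) (r : R) (c : nat -> R) (Hr : 0 < r)
  (Hc : forall x, Rabs x < r -> is_pseries c x (sig x))
  m (u be a : nat -> R) :
  (forall s, sumR m (fun i => a i * sig (s * u i) + Derive sig (s * u i) * s * be i) = 0) ->
  forall n, c n * sumR m (fun i => a i * u i ^ n + INR n * be i * u i ^ (n - 1)) = 0.
Proof.
  intros Hid.
  set (U := 1 + sumR m (fun i => Rabs (u i))).
  assert (HU0 : 0 <= sumR m (fun i => Rabs (u i))) by (apply sumR_nonneg; intros; apply Rabs_pos).
  assert (HU : 1 <= U) by (unfold U; lra).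
  set (del := r / U).
  assert (Hdel : 0 < del) by (unfold del; apply Rdiv_lt_0_compat; lra).
  assert (Hsmall : forall s i, Rabs s < del -> (i < m)%nat -> Rabs (s * u i) < r).
  { intros s i Hs Hi. rewrite Rabs_mult.
    assert (Rabs (u i) <= U).
    { unfold U. pose proof (sumR_term m (fun i => Rabs (u i)) i ltac:(intros; apply Rabs_pos) Hi). simpl in H. lra. }
    assert (Rabs s * U < r).
    { apply (Rmult_lt_compat_r U) in Hs; [|lra]. unfold del in Hs. unfold Rdiv in Hs.
      rewrite Rmult_assoc, Rinv_l in Hs; lra. }
    pose proof (Rabs_pos s). pose proof (Rabs_pos (u i)). nra. }
  set (e := fun n => c n * sumR m (fun i => a i * u i ^ n + INR n * be i * u i ^ (n - 1))).
  assert (He : forall s, Rabs s < del -> is_pseries e s 0).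
  { intros s Hs. apply ps_iff.
    rewrite <- (Hid s).
    eapply is_series_ext; cycle 1.
    - apply (is_series_sumR m (fun i n => (c n * (a i * u i ^ n + INR n * be i * u i ^ (n - 1))) * s ^ n)).
      intros i Hi.
      assert (H1 := Hc _ (Hsmall s i Hs Hi)). apply ps_iff in H1.
      apply (is_series_scalR _ _ (a i)) in H1.
      assert (H2 := L3 sig r c Hc _ (Hsmall s i Hs Hi)). apply ps_iff in H2.
      apply (is_series_scalR _ _ (s * be i)) in H2.
      assert (H3 : is_series (fun n => c n * INR n * be i * u i ^ (n - 1) * s ^ n)
                     (Derive sig (s * u i) * s * be i)).
      { apply is_series_decr_1.
        match goal with |- is_series _ ?l => replace l with (s * be i * Derive sig (s * u i)) end.
        2: { unfold plus, opp; simpl. ring. }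
        eapply is_series_ext; [|exact H2].
        intros k. simpl. replace (k - 0)%nat with k by lia. unfold PS_derive. rewrite Rpow_mult_distr. simpl. ring. }
      eapply is_series_ext; [|exact (is_series_plusR _ _ _ _ H1 H3)].
      intros n. simpl. rewrite Rpow_mult_distr. ring.
    - intros n. simpl. unfold e.
      rewrite <- (sumR_scal m (c n)), Rmult_comm, <- sumR_scal. apply sumR_ext. intros; ring. }
  assert (Hcv : Rbar_lt 0 (CV_radius e)).
  { pose proof (radius_lb e del ltac:(intros x Hx; eexists; apply He; auto) 0 ltac:(rewrite Rabs_R0; auto)).
    rewrite Rabs_R0 in H; exact H. }
  intros n. fold (e n).
  apply (PSeries_ext_recip e (fun _ => 0) n Hcv).
  rewrite CV_radius_const_0; simpl; auto.
  exists (mkposreal _ Hdel). intros t Ht.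
  unfold ball in Ht; simpl in Ht; unfold AbsRing_ball, abs, minus, plus, opp in Ht; simpl in Ht.
  rewrite Ropp_0, Rplus_0_r in Ht.
  rewrite PSeries_const_0. apply is_pseries_unique, He; auto.
Qed.

Lemma Rabs_eq_cases x y : Rabs x = Rabs y -> x = y \/ x = - y.
Proof. unfold Rabs; destruct (Rcase_abs x); destruct (Rcase_abs y); intros; lra. Qed.

Lemma inj_unbounded (f : nat -> nat) : (forall a b, f a = f b -> a = b) ->
  forall N, exists j, (N <= f j)%nat.
Proof.
  intros Hf N. apply NNPP; intro H.
  assert (Hlt : forall j, (f j < N)%nat).
  { intros j. destruct (Nat.lt_ge_cases (f j) N); auto. exfalso; apply H; exists j; auto. }
  assert (Hnd : NoDup (map f (seq 0 (S N)))).
  { apply Injective_map_NoDup. intros a b; apply Hf. apply seq_NoDup. }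
  assert (Hinc : incl (map f (seq 0 (S N))) (seq 0 N)).
  { intros x Hx. apply in_map_iff in Hx. destruct Hx as [j [<- _]]. apply in_seq.
    specialize (Hlt j). lia. }
  pose proof (NoDup_incl_length Hnd Hinc). rewrite length_map, !length_seq in H0. lia.
Qed.

Theorem mainTheorem13 (sigma : R -> R) (d m : nat) (w : nat -> nat -> R) :
  real_analytic sigma ->
  (exists nj : nat -> nat,
      (forall j1 j2, nj j1 = nj j2 -> j1 = j2) /\
      (forall j, Derive_n sigma (nj j) 0 <> 0)) ->
  (forall i, (i < m)%nat -> exists t, (t < d)%nat /\ w i t <> 0) ->
  (forall k j, (k < j)%nat -> (j < m)%nat ->
      (exists t, (t < d)%nat /\ w k t <> w j t) /\
      (exists t, (t < d)%nat /\ w k t <> - w j t)) ->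
  forall (a : nat -> R) (b : nat -> nat -> R),
    (forall x : nat -> R,
        sumR m (fun i =>
          a i * sigma (dotR d (w i) x)
          + sumR d (fun t => b i t * (Derive sigma (dotR d (w i) x) * x t))) = 0) ->
    (forall i, (i < m)%nat -> a i = 0) /\
    (forall i t, (i < m)%nat -> (t < d)%nat -> b i t = 0).
Proof.
  intros Han [nj [Hinj Hder]] Hw0 Hwpm a b Hid.
  destruct (Han 0) as [r [Hr [c Hc0]]].
  assert (Hc : forall x, Rabs x < r -> is_pseries c x (sigma x)).
  { intros x Hx. rewrite <- (Rminus_0_r x) at 1. apply Hc0. rewrite Rminus_0_r; auto. }
  set (S := fun n => exists j, nj j = n).
  assert (HS : forall N, exists n, (N <= n)%nat /\ S n).
  { intros N. destruct (inj_unbounded nj Hinj N) as [j Hj]. exists (nj j); split; auto. exists j; auto. }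
  assert (Hcn : forall n, S n -> c n <> 0).
  { intros n [j <-] Hcz. apply (Hder j). rewrite (L4 sigma r c Hr Hc), Hcz. ring. }
  set (u := fun (l : R) i => dotR d (w i) (fun t => l ^ t)).
  set (be := fun (l : R) i => dotR d (b i) (fun t => l ^ t)).
  assert (HA : forall l n, S n ->
     sumR m (fun i => a i * u l i ^ n + INR n * be l i * u l i ^ (n - 1)) = 0).
  { intros l n Sn. pose proof (coef_id sigma r c Hr Hc m (u l) (be l) a) as H.
    assert (Hyp : forall s, sumR m (fun i => a i * sigma (s * u l i)
                      + Derive sigma (s * u l i) * s * be l i) = 0).
    { intros s. rewrite <- (Hid (fun t => s * l ^ t)). apply sumR_ext. intros i Hi.
      assert (Hd : dotR d (w i) (fun t => s * l ^ t) = s * u l i).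
      { unfold u, dotR. rewrite <- sumR_scal. apply sumR_ext; intros; ring. }
      rewrite Hd. f_equal. unfold be, dotR. rewrite <- sumR_scal. apply sumR_ext; intros; ring. }
    specialize (H Hyp n). apply Rmult_integral in H. destruct H as [H|H]; auto.
    exfalso; apply (Hcn n Sn); auto. }
  assert (Hgen : exists R0, forall l, R0 < l ->
     (forall i, (i < m)%nat -> u l i <> 0) /\
     (forall j, (j < m)%nat -> forall k, (k < j)%nat -> u l k <> u l j /\ u l k <> - u l j)).
  { destruct (ev_fin m (fun i l => u l i <> 0)) as [R1 H1].
    { intros i Hi. apply (poly_ev d (w i) (Hw0 i Hi)). }
    destruct (ev_fin m (fun j l => forall k, (k < j)%nat -> u l k <> u l j /\ u l k <> - u l j)) as [R2 H2].
    { intros j Hj. apply (ev_fin j (fun k l => u l k <> u l j /\ u l k <> - u l j)).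
      intros k Hk. destruct (Hwpm k j Hk Hj) as [[t1 [Ht1 E1]] [t2 [Ht2 E2]]].
      destruct (poly_ev d (fun t => w k t - w j t)) as [Ra HRa].
      { exists t1; split; auto; lra. }
      destruct (poly_ev d (fun t => w k t + w j t)) as [Rb HRb].
      { exists t2; split; auto; lra. }
      exists (Rmax Ra Rb). intros l Hl.
      assert (Ra < l) by (eapply Rle_lt_trans; [apply Rmax_l|eauto]).
      assert (Rb < l) by (eapply Rle_lt_trans; [apply Rmax_r|eauto]).
      split; intro Heq.
      - apply (HRa l H). rewrite (sumR_ext _ _ (fun t => w k t * l ^ t - w j t * l ^ t)).
        rewrite sumR_minus. unfold u, dotR in Heq. lra. intros; ring.
      - apply (HRb l H0). rewrite (sumR_ext _ _ (fun t => w k t * l ^ t + w j t * l ^ t)).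
        rewrite sumR_plus. unfold u, dotR in Heq. lra. intros; ring. }
    exists (Rmax R1 R2). intros l Hl.
    assert (R1 < l) by (eapply Rle_lt_trans; [apply Rmax_l|eauto]).
    assert (R2 < l) by (eapply Rle_lt_trans; [apply Rmax_r|eauto]).
    split; intros; [apply H1|apply H2]; auto. }
  destruct Hgen as [R0 Hgen].
  assert (Hmain : forall l, R0 < l -> forall i, (i < m)%nat -> a i = 0 /\ be l i = 0).
  { intros l Hl. destruct (Hgen l Hl) as [Hu Hpm].
    assert (Hsum : forall n, S n -> sumR m (fun j => (a j + INR n * (be l j / u l j)) * u l j ^ n) = 0).
    { intros n Sn. rewrite <- (HA l n Sn). apply sumR_ext. intros j Hj.
      specialize (Hu j Hj). destruct n; simpl; [ring|].
      replace (n - 0)%nat with n by lia. field; auto. }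
    assert (Habs : forall i j, (i < m)%nat -> (j < m)%nat -> i <> j -> Rabs (u l i) <> Rabs (u l j)).
    { intros i j Hi Hj Hij Heq. apply Rabs_eq_cases in Heq.
      destruct (Nat.lt_ge_cases i j).
      - destruct (Hpm j Hj i H); tauto.
      - destruct (Hpm i Hi j ltac:(lia)); destruct Heq; [apply H0|apply H1]; lra. }
    intros i Hi. destruct (exp_lemma m a (fun i => be l i / u l i) (u l) S HS Hsum Hu Habs i Hi) as [Ha Hq].
    split; auto. unfold Rdiv in Hq. apply Rmult_integral in Hq. destruct Hq as [Hq|Hq]; auto.
    exfalso. apply (Rinv_neq_0_compat (u l i)); auto. }
  split.
  - intros i Hi. destruct (Hmain (R0 + 1) ltac:(lra) i Hi); auto.
  - intros i t Hi Ht. apply NNPP; intro Hb.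
    destruct (poly_ev d (b i) (ex_intro _ t (conj Ht Hb))) as [R1 HR1].
    assert (Hl0 : R0 < Rmax R0 R1 + 1) by (pose proof (Rmax_l R0 R1); lra).
    assert (Hl1 : R1 < Rmax R0 R1 + 1) by (pose proof (Rmax_r R0 R1); lra).
    apply (HR1 _ Hl1). destruct (Hmain _ Hl0 i Hi) as [_ Hbe]. exact Hbe.
Qed.
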